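(* Consider the multi-scenario problem and the consensus-ADMM iteration described in the context, and let $\dot{z}$ be the optimal value of the original (non-decomposed) problem. For each iteration $\nu\ge 0$ and each scenario pair $(\gamma,k)$ define $$D^{\nu}_{\gamma k}=\max_{x\in\mathcal{Q}_{\gamma k}}\sum_{t\in\mathcal{T}}\Big(c_{t\gamma k}^{\top}x_t-(\mu^{\nu}_{t\gamma k})^{\top}X_t\Big),$$ where $X_t$ is the investment sub-vector of $x_t$. Then at every iteration $\nu$, $$\text{GUB}^{\nu}:=\sum_{\gamma\in\mathcal{G}}\sum_{k\in\mathcal{K}}\pi^{\text{LT}}_\gamma\pi^{\text{MS}}_k\,D^{\nu}_{\gamma k}\;\ge\;\dot{z}.$$
   Context: Setting. $\mathcal{T}$ is a finite set of time stages; $\mathcal{G}$ is a finite set of long-term scenarios with probabilities $\pi^{\text{LT}}_\gamma>0$, $\sum_{\gamma}\pi^{\text{LT}}_\gamma=1$; $\mathcal{K}$ is a finite set of short-term (market) scenarios with probabilities $\pi^{\text{MS}}_k>0$, $\sum_k\pi^{\text{MS}}_k=1$. For each stage $t$, $\mathcal{P}_t$ is a partition of $\mathcal{G}$ into nodes of the long-term scenario tree at stage $t$. For each scenario pair $(\gamma,k)$ there is a decision vector $x_{\gamma k}=(x_{t\gamma k})_{t\in\mathcal{T}}$ constrained to a (possibly non-convex, e.g. mixed-integer) feasible set $\mathcal{Q}_{\gamma k}$, and cost vectors $c_{t\gamma k}$; each $x_{t\gamma k}$ contains a sub-vector of investment decisions $X_{t\gamma k}$. The maxima defining $D^\nu_{\gamma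 k}$ are assumed to be attained. The original problem is: maximize $\sum_{\gamma}\sum_{k}\pi^{\text{LT}}_\gamma\pi^{\text{MS}}_k\sum_{t}c_{t\gamma k}^{\top}x_{t\gamma k}$ subject to $x_{\gamma k}\in\mathcal{Q}_{\gamma k}$ for all $(\gamma,k)$ and the non-anticipativity conditions $X_{t\gamma k}=X_{t\gamma' k'}$ for all $t$, all $k,k'\in\mathcal{K}$ and all $\gamma,\gamma'$ in the same node of $\mathcal{P}_t$; $\dot z$ is its optimal value (attained). (In the paper this is the single-level MILP reformulation of a bilevel multi-stage strategic generation investment problem.) Consensus-ADMM iteration with penalty $\rho>0$, dual variables initialized by $\mu^{-1}_{t\gamma k}=0$ and some initial $X^{-1}_{t\gamma k}$: at iteration $\nu=0,1,2,\dots$: (i) for each $(\gamma,k)$, $X^{\nu}_{\cdot\gamma k}$ is the investment part of a maximizer over $x\in\mathcal{Q}_{\gamma k}$ of $\sum_{t}\big(c_{t\gamma k}^{\top}x_t-(\mu^{\nu-1}_{t\gamma k})^{\top}X_t-\tfrac{\rho}{2}\|X_t-X^{\nu-1}_{t\gamma k}\|_2^2\big)$; (ii) for each $t$ and $(\gamma,k)$ with $\gamma$ in node $N\in\mathcal{P}_t$, $\overline{X}^{\nu}_{t\gamma k}=\dfrac{\sum_{\gamma'\in N,k'\in\mathcal{K}}\pi^{\text{LT}}_{\gamma'}\pi^{\text{MS}}_{k'}X^{\nu}_{t\gamma'k'}}{\sum_{\gamma'\in N,k'\in\mathcal{K}}\pi^{\text{LT}}_{\gamma'}\pi^{\text{MS}}_{k'}}$;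 (iii) $\mu^{\nu}_{t\gamma k}=\mu^{\nu-1}_{t\gamma k}+\rho\,(X^{\nu}_{t\gamma k}-\overline{X}^{\nu}_{t\gamma k})$. *)

(* Defs.v *)
From HB Require Import structures.
From mathcomp Require Import all_boot all_order all_algebra.
Set Implicit Arguments. Unset Strict Implicit. Unset Printing Implicit Defensive.
Import Order.TTheory GRing.Theory Num.Theory.
Local Open Scope ring_scope.

Definition dotv {R : comRingType} {n : nat} (u v : 'rV[R]_n) : R :=
  \sum_(i < n) u 0 i * v 0 i.

Definition invest {R : comRingType} {n m : nat} (sel : 'I_m -> 'I_n)
  (x : 'rV[R]_n) : 'rV[R]_m := \row_(i < m) x 0 (sel i).

Definition decision (R : comRingType) (T : finType) (n : T -> nat) :=
  forall t : T, 'rV[R]_(n t).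

Definition xbar {R : fieldType} {T G K : finType} {m : T -> nat}
  (P : T -> {set {set G}}) (piLT : G -> R) (piMS : K -> R)
  (X : forall t : T, G -> K -> 'rV[R]_(m t)) (t : T) (g : G) : 'rV[R]_(m t) :=
  (\sum_(g' in pblock (P t) g) \sum_(k' : K) piLT g' * piMS k')^-1 *:
  (\sum_(g' in pblock (P t) g) \sum_(k' : K) (piLT g' * piMS k') *: X t g' k').

(* Dual variables. Index shift: Xs 0 = X^{-1} (initial), Xs nu.+1 = X^nu;
   mu_seq 0 = mu^{-1} = 0, mu_seq nu.+1 = mu^nu (step (iii)). *)
Fixpoint mu_seq {R : fieldType} {T G K : finType} {m : T -> nat}
  (P : T -> {set {set G}}) (piLT : G -> R) (piMS : K -> R) (rho : R)
  (Xs : nat -> forall t : T, G -> K -> 'rV[R]_(m t)) (nu : nat)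
  : forall t : T, G -> K -> 'rV[R]_(m t) :=
  match nu with
  | 0 => fun t g k => 0
  | nu'.+1 => fun t g k =>
      mu_seq P piLT piMS rho Xs nu' t g k
      + rho *: (Xs nu'.+1 t g k - xbar P piLT piMS (Xs nu'.+1) t g)
  end.

Definition lagr_obj {R : comRingType} {T : finType} {n m : T -> nat}
  (sel : forall t, 'I_(m t) -> 'I_(n t))
  (c : forall t, 'rV[R]_(n t)) (mu : forall t, 'rV[R]_(m t))
  (x : decision R n) : R :=
  \sum_(t : T) (dotv (c t) (x t) - dotv (mu t) (invest (sel t) (x t))).

Definition aug_obj {R : fieldType} {T : finType} {n m : T -> nat}
  (sel : forall t, 'I_(m t) -> 'I_(n t)) (rho : R)
  (c : forall t, 'rV[R]_(n t)) (mu : forall t, 'rV[R]_(m t))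
  (Xprev : forall t, 'rV[R]_(m t)) (x : decision R n) : R :=
  \sum_(t : T) (dotv (c t) (x t) - dotv (mu t) (invest (sel t) (x t))
     - rho / 2%:R * dotv (invest (sel t) (x t) - Xprev t)
                         (invest (sel t) (x t) - Xprev t)).

Definition orig_obj {R : comRingType} {T G K : finType} {n : T -> nat}
  (piLT : G -> R) (piMS : K -> R) (c : forall t, G -> K -> 'rV[R]_(n t))
  (x : G -> K -> decision R n) : R :=
  \sum_(g : G) \sum_(k : K) piLT g * piMS k * \sum_(t : T) dotv (c t g k) (x g k t).

Definition orig_feasible {R : comRingType} {T G K : finType} {n m : T -> nat}
  (sel : forall t, 'I_(m t) -> 'I_(n t)) (P : T -> {set {set G}})
  (Q : G -> K -> decision R n -> Prop) (x : G -> K -> decision R n) : Prop :=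
  (forall g k, Q g k (x g k)) /\
  (forall (t : T) (g g' : G) (k k' : K), g' \in pblock (P t) g ->
      invest (sel t) (x g k t) = invest (sel t) (x g' k' t)).

(* Main.v *)
Require Import Defs.
From HB Require Import structures.
From mathcomp Require Import all_boot all_order all_algebra.
From mathcomp Require Import ring.
Import Order.TTheory GRing.Theory Num.Theory.
Local Open Scope ring_scope.

Lemma dotv_suml (R : comRingType) (n : nat) (I : Type) (r : seq I) (a : I -> R)
  (u : I -> 'rV[R]_n) (v : 'rV[R]_n) :
  dotv (\sum_(i <- r) a i *: u i) v = \sum_(i <- r) a i * dotv (u i) v.
Proof.
rewrite /dotv.
under eq_bigr => j _ do rewrite summxE big_distrl /=.
rewrite exchange_big /=; apply: eq_bigr => i _.
rewrite big_distrr /=; apply: eq_bigr => j _; rewrite mxE; ring.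
Qed.

Lemma dotv0l (R : comRingType) (n : nat) (v : 'rV[R]_n) : dotv 0 v = 0.
Proof. by rewrite /dotv big1 // => i _; rewrite mxE mul0r. Qed.

Lemma mu_zero (R : realFieldType) (T G K : finType) (m : T -> nat)
  (P : T -> {set {set G}}) (HP : forall t, partition (P t) [set: G])
  (piLT : G -> R) (piMS : K -> R)
  (HpiLT : forall g, 0 < piLT g)
  (HpiMS : forall k, 0 < piMS k) (HpiMS1 : \sum_(k : K) piMS k = 1)
  (rho : R) (Xs : nat -> forall t : T, G -> K -> 'rV[R]_(m t)) nu t g0 :
  \sum_(g in pblock (P t) g0) \sum_(k : K) (piLT g * piMS k) *:
     mu_seq P piLT piMS rho Xs nu t g k = 0.
Proof.
have [/eqP cov [tI _]] : cover (P t) == [set: G] /\ trivIset (P t) /\ true.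
  by move: (HP t) => /and3P [-> -> _].
elim: nu => [|nu IH] /=.
  by rewrite big1 // => g _; rewrite big1 // => k _; rewrite scaler0.
set B := pblock (P t) g0.
set S := \sum_(g' in B) \sum_(k' : K) piLT g' * piMS k'.
set Y := \sum_(g' in B) \sum_(k' : K) (piLT g' * piMS k') *: Xs nu.+1 t g' k'.
have xb : forall g, g \in B -> xbar P piLT piMS (Xs nu.+1) t g = S^-1 *: Y.
  by move=> g gB; rewrite /xbar (same_pblock tI gB).
have S0 : S != 0.
  have g0B : g0 \in B by rewrite /B mem_pblock cov inE.
  rewrite /S (bigD1 g0) //= -big_distrr /= HpiMS1 mulr1.
  apply: lt0r_neq0; apply: ltr_pwDl; first exact: HpiLT.
  apply: sumr_ge0 => g _; rewrite -big_distrr /= HpiMS1 mulr1; exact: ltW.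
transitivity (\sum_(g in B) \sum_(k : K) ((piLT g * piMS k) *: mu_seq P piLT piMS rho Xs nu t g k
   + rho *: ((piLT g * piMS k) *: Xs nu.+1 t g k) - rho *: ((piLT g * piMS k) *: (S^-1 *: Y)))).
  apply: eq_bigr => g gB; apply: eq_bigr => k _.
  rewrite xb // scalerDr -addrA; congr (_ + _); rewrite scalerBr !scalerA.
  rewrite scalerBr !scalerA; congr (_ *: _ + - (_ *: _)); ring.
under eq_bigr => g _ do rewrite sumrB big_split /=.
rewrite sumrB big_split /= IH add0r.
under eq_bigr => g _ do rewrite -scaler_sumr.
rewrite -scaler_sumr -/Y.
under [X in _ - X]eq_bigr => g _ do rewrite -scaler_sumr.
rewrite -scaler_sumr.
have -> : \sum_(g in B) \sum_(i : K) (piLT g * piMS i) *: (S^-1 *: Y) = S *: (S^-1 *: Y).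
  by rewrite /S scaler_suml; apply: eq_bigr => g _; rewrite scaler_suml.
rewrite [S *: _]scalerA mulfV // scale1r subrr //.
Qed.

Lemma dotv_sum (R : comRingType) (n : nat) (I : Type) (r : seq I) (p : pred I)
  (u : I -> 'rV[R]_n) (v : 'rV[R]_n) :
  dotv (\sum_(i <- r | p i) u i) v = \sum_(i <- r | p i) dotv (u i) v.
Proof.
rewrite /dotv.
under eq_bigr => j _ do rewrite summxE big_distrl /=.
by rewrite exchange_big.
Qed.

Lemma dotvZ (R : comRingType) (n : nat) (a : R) (u v : 'rV[R]_n) :
  dotv (a *: u) v = a * dotv u v.
Proof.
rewrite /dotv big_distrr /=; apply: eq_bigr => j _; rewrite mxE; ring.
Qed.

Theorem theorem1 (R : realFieldType) (T G K : finType) (n m : T -> nat)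
  (sel : forall t : T, 'I_(m t) -> 'I_(n t))
  (Hsel : forall t, injective (sel t))
  (P : T -> {set {set G}}) (HP : forall t, partition (P t) [set: G])
  (piLT : G -> R) (piMS : K -> R)
  (HpiLT : forall g, 0 < piLT g) (HpiLT1 : \sum_(g : G) piLT g = 1)
  (HpiMS : forall k, 0 < piMS k) (HpiMS1 : \sum_(k : K) piMS k = 1)
  (c : forall t : T, G -> K -> 'rV[R]_(n t))
  (Q : G -> K -> decision R n -> Prop)
  (zdot : R)
  (Hzdot : (exists x, orig_feasible sel P Q x /\ orig_obj piLT piMS c x = zdot) /\
           (forall x, orig_feasible sel P Q x -> orig_obj piLT piMS c x <= zdot))
  (rho : R) (Hrho : 0 < rho)
  (Xs : nat -> forall t : T, G -> K -> 'rV[R]_(m t))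
  (HX : forall (nu : nat) (g : G) (k : K), exists x : decision R n,
     [/\ Q g k x,
         (forall y, Q g k y ->
            aug_obj sel rho (fun t => c t g k)
              (fun t => mu_seq P piLT piMS rho Xs nu t g k)
              (fun t => Xs nu t g k) y
            <= aug_obj sel rho (fun t => c t g k)
              (fun t => mu_seq P piLT piMS rho Xs nu t g k)
              (fun t => Xs nu t g k) x) &
         (forall t, Xs nu.+1 t g k = invest (sel t) (x t))])
  (D : nat -> G -> K -> R)
  (HD : forall (nu : nat) (g : G) (k : K),
     (exists x, Q g k x /\
        lagr_obj sel (fun t => c t g k)
          (fun t => mu_seq P piLT piMS rho Xs nu.+1 t g k) x = D nu g k) /\
     (forall x, Q g k x ->
        lagr_obj sel (fun t => c t g k)
          (fun t => mu_seq P piLT piMS rho Xs nu.+1 t g k) x <= D nu g k)) :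
  forall nu : nat,
    zdot <= \sum_(g : G) \sum_(k : K) piLT g * piMS k * D nu g k.
Proof.
move=> nu; case: Hzdot => [[x [[HQ HNA] <-]] _].
set mu := mu_seq P piLT piMS rho Xs nu.+1.
have [k0 _] : exists k0 : K, true.
  case: (pickP (fun _ : K => true)) => [k0 _|H]; first by exists k0.
  by move: HpiMS1; rewrite big_pred0 // => /esym/eqP; rewrite oner_eq0.
have E0 : forall t, \sum_(g : G) \sum_(k : K) piLT g * piMS k *
     dotv (mu t g k) (invest (sel t) (x g k t)) = 0.
  move=> t.
  have [tI _] : trivIset (P t) /\ true by move: (HP t) => /and3P [_ -> _].
  transitivity (\sum_(g in [set: G]) \sum_(k : K) piLT g * piMS k *
     dotv (mu t g k) (invest (sel t) (x g k t))).
    by apply: eq_bigl => g; rewrite inE.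
  rewrite (set_partition_big _ (HP t)) /=.
  apply: big1 => A PA.
  case: (pickP (mem A)) => [g0 g0A|H]; last by rewrite big_pred0.
  have pb : pblock (P t) g0 = A by apply: def_pblock.
  transitivity (dotv (\sum_(g in A) \sum_(k : K) (piLT g * piMS k) *: mu t g k)
                     (invest (sel t) (x g0 k0 t))).
    rewrite dotv_sum; apply: eq_bigr => g gA.
    rewrite dotv_sum; apply: eq_bigr => k _.
    rewrite dotvZ (HNA t g0 g k0 k) // pb //.
  rewrite -pb mu_zero //; exact: dotv0l.
apply: (@le_trans _ _ (\sum_(g : G) \sum_(k : K) piLT g * piMS k *
   lagr_obj sel (fun t => c t g k) (fun t => mu t g k) (x g k))).
  rewrite /lagr_obj.
  under eq_bigr => g _ do under eq_bigr => k _ do rewrite sumrB mulrBr.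
  under eq_bigr => g _ do rewrite sumrB.
  rewrite sumrB.
  have -> : \sum_(g : G) \sum_(k : K) piLT g * piMS k *
      \sum_t dotv (mu t g k) (invest (sel t) (x g k t)) = 0.
    under eq_bigr => g _ do under eq_bigr => k _ do rewrite big_distrr /=.
    under eq_bigr => g _ do rewrite exchange_big /=.
    rewrite exchange_big /=; apply: big1 => t _; exact: E0.
  by rewrite subr0.
apply: ler_sum => g _; apply: ler_sum => k _.
apply: ler_wpM2l; first by apply: mulr_ge0; apply: ltW.
by apply: (proj2 (HD nu g k)).
Qed.
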